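(* Let $n\ge1$ and $1\le p\le n$. A configuration $C\in\mathcal{S}(n,p)$ is $p$-toppleable if and only if for every $1\le i\le n+1$, $p+i-n-1\le C^{-1}(i)\le p+i-1$, where $C^{-1}(i)$ is the site of chip $i$ in $C$.
   Context: Sites are $0,\dots,n+1$. A configuration in $\mathcal{S}(n,p)$ places $n+1$ distinct chips labeled $1,\dots,n+1$ with sites $0,n+1$ empty, one chip at each site of $\{1,\dots,n\}\setminus\{p\}$ and two chips at site $p$. Toppling: while some site holds at least two chips, choose such a site $i$ and two chips $\alpha<\beta$ there and move $\alpha$ to $i-1$, $\beta$ to $i+1$. It is known this terminates with at most one chip per site within sites $0,\dots,n+1$, and the final configuration is independent of the choices. $C$ is $p$-toppleable if reading the labels of the final configuration from left to right gives $1,2,\dots,n+1$ in increasing order. *)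

(* Defs.v *)
(* Chips are labelled by natural numbers 1..n+1; a configuration
   is described by the map  pos : nat -> Z  giving the site of each chip
   (pos i = C^{-1}(i)); values of pos outside chips 1..n+1 are irrelevant. *)
From Stdlib Require Import ZArith List Relations.
Import ListNotations.
Open Scope Z_scope.

Definition chips (n : nat) : list nat := seq 1 (S n).

Definition is_chip (n i : nat) : Prop := (1 <= i <= S n)%nat.

Definition load (n : nat) (pos : nat -> Z) (s : Z) : nat :=
  length (filter (fun i => Z.eqb (pos i) s) (chips n)).

Definition in_S (n p : nat) (pos : nat -> Z) : Prop :=
  (forall i, is_chip n i -> 1 <= pos i <= Z.of_nat n) /\
  (forall s : nat, (1 <= s <= n)%nat ->
      load n pos (Z.of_nat s) = (if Nat.eqb s p then 2%nat else 1%nat)).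

Definition topple_step (n : nat) (pos pos' : nat -> Z) : Prop :=
  exists (a b : nat) (s : Z),
    is_chip n a /\ is_chip n b /\ (a < b)%nat /\ pos a = s /\ pos b = s /\
    forall i, pos' i = (if Nat.eqb i a then s - 1
                        else if Nat.eqb i b then s + 1 else pos i).

Definition topple_reach (n : nat) : relation (nat -> Z) :=
  clos_refl_trans (nat -> Z) (topple_step n).

Definition stable (n : nat) (pos : nat -> Z) : Prop :=
  forall i j, is_chip n i -> is_chip n j -> i <> j -> pos i <> pos j.

Definition reads_increasing (n : nat) (pos : nat -> Z) : Prop :=
  forall i j, is_chip n i -> is_chip n j -> (i < j)%nat -> pos i < pos j.

(* p-toppleable: toppling until stable ends in the increasingly-labelled
   configuration (the final configuration is known to be unique). *)
Definition toppleable (n : nat) (pos : nat -> Z) : Prop :=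
  exists fin, topple_reach n pos fin /\ stable n fin /\ reads_increasing n fin.

(* Main.v *)
Require Import Defs.
From Stdlib Require Import ZArith List Relations Lia FunctionalExtensionality.
Import ListNotations.
Open Scope bool_scope.
Open Scope Z_scope.

Definition cnt (l : list nat) (f : nat -> bool) : nat := length (filter f l).

Lemma cnt_nil f : cnt [] f = 0%nat.
Proof. reflexivity. Qed.

Lemma cnt_cons x l f : cnt (x :: l) f = (Nat.b2n (f x) + cnt l f)%nat.
Proof. unfold cnt; simpl; destruct (f x); reflexivity. Qed.

Lemma cnt_ext l f g : (forall x, In x l -> f x = g x) -> cnt l f = cnt l g.
Proof.
  induction l as [|y l IH]; intros H; [reflexivity|].
  rewrite !cnt_cons, H by (left; auto). rewrite IH; auto.
  intros; apply H; right; auto.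
Qed.

Lemma cnt_app l1 l2 f : cnt (l1 ++ l2) f = (cnt l1 f + cnt l2 f)%nat.
Proof. unfold cnt; rewrite filter_app, length_app; reflexivity. Qed.

Lemma cnt_split l f g h :
  (forall x, In x l -> Nat.b2n (f x) = (Nat.b2n (g x) + Nat.b2n (h x))%nat) ->
  cnt l f = (cnt l g + cnt l h)%nat.
Proof.
  induction l as [|y l IH]; intros H; [reflexivity|].
  rewrite !cnt_cons, IH by (intros; apply H; right; auto).
  rewrite (H y) by (left; auto). lia.
Qed.

Lemma cnt_le l f g :
  (forall x, In x l -> f x = true -> g x = true) -> (cnt l f <= cnt l g)%nat.
Proof.
  induction l as [|y l IH]; intros H; [unfold cnt; simpl; lia|].
  rewrite !cnt_cons. specialize (IH (fun x Hx => H x (or_intror Hx))).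
  destruct (f y) eqn:E.
  - rewrite (H y (or_introl eq_refl) E). simpl; lia.
  - destruct (g y); simpl; lia.
Qed.

Lemma cnt_zero l f : (forall x, In x l -> f x = false) -> cnt l f = 0%nat.
Proof.
  induction l as [|y l IH]; intros H; [reflexivity|].
  rewrite cnt_cons, H by (left; auto). rewrite IH; auto.
  intros; apply H; right; auto.
Qed.

Lemma cnt_ex l f : cnt l f <> 0%nat -> exists x, In x l /\ f x = true.
Proof.
  induction l as [|y l IH]; intros H; [unfold cnt in H; simpl in H; lia|].
  rewrite cnt_cons in H. destruct (f y) eqn:E.
  - exists y; split; auto. left; auto.
  - simpl in H. destruct (IH H) as [x [H1 H2]]. exists x; split; auto. right; auto.
Qed.

Lemma cnt_remove l f a : NoDup l -> In a l ->
  cnt l f = (Nat.b2n (f a) + cnt l (fun x => negb (Nat.eqb x a) && f x))%nat.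
Proof.
  induction l as [|y l IH]; intros ND Ha; [destruct Ha|].
  inversion ND; subst. rewrite !cnt_cons.
  destruct Ha as [->|Ha].
  - rewrite Nat.eqb_refl. simpl.
    rewrite (cnt_ext l (fun x => negb (Nat.eqb x a) && f x) f); [lia|].
    intros x Hx. destruct (Nat.eqb_spec x a); [subst; contradiction|reflexivity].
  - rewrite IH by auto. destruct (Nat.eqb_spec y a); [subst; contradiction|]. simpl. lia.
Qed.

Lemma cnt_seq_le a k K : (cnt (seq a k) (fun i => Nat.leb i K) <= S K - a)%nat.
Proof.
  revert a; induction k as [|k IH]; intros a; simpl seq; [unfold cnt; simpl; lia|].
  rewrite cnt_cons. specialize (IH (S a)).
  destruct (Nat.leb_spec a K); simpl Nat.b2n; lia.
Qed.

Lemma cnt_two l f : NoDup l -> (2 <= cnt l f)%nat ->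
  exists x y, x <> y /\ In x l /\ In y l /\ f x = true /\ f y = true.
Proof.
  intros ND H. destruct (cnt_ex l f) as [x [Hx Fx]]; [lia|].
  rewrite (cnt_remove l f x ND Hx), Fx in H. simpl in H.
  destruct (cnt_ex l (fun y => negb (Nat.eqb y x) && f y)) as [y [Hy Fy]]; [lia|].
  apply andb_prop in Fy as [F1 F2]. destruct (Nat.eqb_spec y x); [discriminate|].
  exists x, y; repeat split; auto.
Qed.

Lemma cnt_ge2 l f x y : NoDup l -> x <> y -> In x l -> In y l -> f x = true -> f y = true ->
  (2 <= cnt l f)%nat.
Proof.
  intros ND Hxy Hx Hy Fx Fy.
  rewrite (cnt_remove l f x ND Hx), Fx.
  rewrite (cnt_remove l _ y ND Hy). simpl.
  destruct (Nat.eqb_spec y x); [congruence|]. rewrite Fy. simpl. lia.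
Qed.

Lemma cnt_ge3 l f x y z : NoDup l -> x <> y -> x <> z -> y <> z -> In x l -> In y l -> In z l ->
  f x = true -> f y = true -> f z = true -> (3 <= cnt l f)%nat.
Proof.
  intros ND H1 H2 H3 Hx Hy Hz Fx Fy Fz.
  rewrite (cnt_remove l f x ND Hx), Fx.
  rewrite (cnt_remove l _ y ND Hy).
  rewrite (cnt_remove l _ z ND Hz). simpl.
  destruct (Nat.eqb_spec y x); [congruence|]. rewrite Fy.
  destruct (Nat.eqb_spec z y); [congruence|].
  destruct (Nat.eqb_spec z x); [congruence|]. rewrite Fz. simpl. lia.
Qed.

Lemma cnt_two_pts l f g a b : NoDup l -> a <> b -> In a l -> In b l ->
  (forall x, In x l -> x <> a -> x <> b -> f x = g x) ->
  (cnt l f + Nat.b2n (g a) + Nat.b2n (g b) = cnt l g + Nat.b2n (f a) + Nat.b2n (f b))%nat.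
Proof.
  intros ND Hab Ha Hb H.
  rewrite (cnt_remove l f a ND Ha), (cnt_remove l g a ND Ha).
  rewrite (cnt_remove l (fun x => negb (Nat.eqb x a) && f x) b ND Hb).
  rewrite (cnt_remove l (fun x => negb (Nat.eqb x a) && g x) b ND Hb).
  destruct (Nat.eqb_spec b a); [congruence|]. simpl.
  rewrite (cnt_ext l (fun x => negb (Nat.eqb x b) && (negb (Nat.eqb x a) && f x))
                     (fun x => negb (Nat.eqb x b) && (negb (Nat.eqb x a) && g x))).
  - lia.
  - intros x Hx. destruct (Nat.eqb_spec x b); [reflexivity|].
    destruct (Nat.eqb_spec x a); [reflexivity|]. simpl. apply H; auto.
Qed.

Lemma chips_In n i : In i (chips n) <-> is_chip n i.
Proof. unfold chips, is_chip. rewrite in_seq. lia. Qed.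

Lemma chips_NoDup n : NoDup (chips n).
Proof. apply seq_NoDup. Qed.

Lemma cnt_true l : cnt l (fun _ => true) = length l.
Proof. induction l; [reflexivity|]. rewrite cnt_cons; simpl; lia. Qed.

Definition Lc (n : nat) (pos : nat -> Z) (k : Z) : nat := cnt (chips n) (fun i => pos i <=? k).

Definition Inv (n : nat) (pos : nat -> Z) : Prop :=
  (forall i, is_chip n i -> 0 <= pos i <= Z.of_nat n + 1) /\
  (forall k, 0 <= k <= Z.of_nat n + 1 -> k <= Z.of_nat (Lc n pos k) <= k + 1).

Lemma load_cnt n pos s : load n pos s = cnt (chips n) (fun i => pos i =? s).
Proof. reflexivity. Qed.

Lemma Lc_split n pos k : Lc n pos k = (Lc n pos (k-1) + load n pos k)%nat.
Proof.
  unfold Lc. rewrite load_cnt. apply cnt_split. intros x _.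
  destruct (Z.leb_spec (pos x) k), (Z.leb_spec (pos x) (k-1)), (Z.eqb_spec (pos x) k);
    simpl; lia.
Qed.

Lemma Lc_low n pos k : (forall i, is_chip n i -> k < pos i) -> Lc n pos k = 0%nat.
Proof.
  intros H. unfold Lc. apply cnt_zero. intros x Hx. apply chips_In in Hx.
  specialize (H x Hx). apply Z.leb_gt. lia.
Qed.

Lemma Lc_high n pos k : (forall i, is_chip n i -> pos i <= k) -> Lc n pos k = S n.
Proof.
  intros H. unfold Lc. rewrite (cnt_ext _ _ (fun _ => true)).
  - rewrite cnt_true. unfold chips. rewrite length_seq. reflexivity.
  - intros x Hx. apply chips_In in Hx. apply Z.leb_le. auto.
Qed.

Lemma load_zero n pos t : (forall i, is_chip n i -> pos i <> t) -> load n pos t = 0%nat.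
Proof.
  intros H. rewrite load_cnt. apply cnt_zero. intros x Hx. apply chips_In in Hx.
  apply Z.eqb_neq. auto.
Qed.

Definition fire (pos : nat -> Z) (a b : nat) (s : Z) : nat -> Z :=
  fun i => if Nat.eqb i a then s - 1 else if Nat.eqb i b then s + 1 else pos i.

Lemma step_fire n pos q : topple_step n pos q ->
  exists a b s, is_chip n a /\ is_chip n b /\ (a < b)%nat /\ pos a = s /\ pos b = s /\
    q = fire pos a b s.
Proof.
  intros (a & b & s & Ha & Hb & Hab & Pa & Pb & Hq).
  exists a, b, s. refine (conj Ha (conj Hb (conj Hab (conj Pa (conj Pb _))))).
  apply functional_extensionality. intros i. rewrite Hq. reflexivity.
Qed.

Lemma fire_step n pos a b s : is_chip n a -> is_chip n b -> (a < b)%nat -> pos a = s -> pos b = s ->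
  topple_step n pos (fire pos a b s).
Proof. intros Ha Hb Hab Pa Pb. exists a, b, s. refine (conj Ha (conj Hb (conj Hab (conj Pa (conj Pb _))))). reflexivity. Qed.

Lemma fire_a pos a b s : fire pos a b s a = s - 1.
Proof. unfold fire. rewrite Nat.eqb_refl. reflexivity. Qed.

Lemma fire_b pos a b s : a <> b -> fire pos a b s b = s + 1.
Proof. intros H. unfold fire. destruct (Nat.eqb_spec b a); [congruence|]. rewrite Nat.eqb_refl. reflexivity. Qed.

Lemma fire_o pos a b s i : i <> a -> i <> b -> fire pos a b s i = pos i.
Proof. intros H1 H2. unfold fire. destruct (Nat.eqb_spec i a); [congruence|].
  destruct (Nat.eqb_spec i b); [congruence|]. reflexivity. Qed.

Definition zb (b : bool) : Z := if b then 1 else 0.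

Lemma load_fire n pos a b s t : is_chip n a -> is_chip n b -> a <> b -> pos a = s -> pos b = s ->
  Z.of_nat (load n (fire pos a b s) t) + 2 * zb (t =? s) =
  Z.of_nat (load n pos t) + zb (t =? s - 1) + zb (t =? s + 1).
Proof.
  intros Ha Hb Hab Pa Pb. rewrite !load_cnt.
  pose proof (cnt_two_pts (chips n) (fun i => pos i =? t) (fun i => fire pos a b s i =? t) a b
    (chips_NoDup n) Hab (proj2 (chips_In _ _) Ha) (proj2 (chips_In _ _) Hb)) as H.
  cbv beta in H. rewrite (fire_a pos a b s), (fire_b pos a b s Hab), Pa, Pb in H.
  assert (H' : (cnt (chips n) (fun i => (pos i =? t)%Z) + Nat.b2n (s - 1 =? t)%Z + Nat.b2n (s + 1 =? t)%Z)%nat =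
          (cnt (chips n) (fun i => (fire pos a b s i =? t)%Z) + Nat.b2n (s =? t)%Z + Nat.b2n (s =? t)%Z)%nat).
  { apply H. intros x _ H1 H2. unfold fire. destruct (Nat.eqb_spec x a); [congruence|].
    destruct (Nat.eqb_spec x b); [congruence|]. reflexivity. }
  clear H. unfold zb.
  destruct (Z.eqb_spec (s-1) t), (Z.eqb_spec (s+1) t), (Z.eqb_spec s t),
    (Z.eqb_spec t s), (Z.eqb_spec t (s-1)), (Z.eqb_spec t (s+1)); simpl Nat.b2n in H'; lia.
Qed.

Lemma Lc_fire n pos a b s k : is_chip n a -> is_chip n b -> a <> b -> pos a = s -> pos b = s ->
  Z.of_nat (Lc n (fire pos a b s) k) + zb (k =? s) =
  Z.of_nat (Lc n pos k) + zb (k =? s - 1).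
Proof.
  intros Ha Hb Hab Pa Pb. unfold Lc.
  pose proof (cnt_two_pts (chips n) (fun i => pos i <=? k) (fun i => fire pos a b s i <=? k) a b
    (chips_NoDup n) Hab (proj2 (chips_In _ _) Ha) (proj2 (chips_In _ _) Hb)) as H.
  cbv beta in H. rewrite (fire_a pos a b s), (fire_b pos a b s Hab), Pa, Pb in H.
  assert (H' : (cnt (chips n) (fun i => (pos i <=? k)%Z) + Nat.b2n (s - 1 <=? k)%Z + Nat.b2n (s + 1 <=? k)%Z)%nat =
          (cnt (chips n) (fun i => (fire pos a b s i <=? k)%Z) + Nat.b2n (s <=? k)%Z + Nat.b2n (s <=? k)%Z)%nat).
  { apply H. intros x _ H1 H2. unfold fire. destruct (Nat.eqb_spec x a); [congruence|].
    destruct (Nat.eqb_spec x b); [congruence|]. reflexivity. }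
  clear H. unfold zb.
  destruct (Z.leb_spec (s-1) k), (Z.leb_spec (s+1) k), (Z.leb_spec s k),
    (Z.eqb_spec k s), (Z.eqb_spec k (s-1)); simpl Nat.b2n in H'; lia.
Qed.

Lemma Inv_site n pos a b s : Inv n pos -> is_chip n a -> is_chip n b -> a <> b ->
  pos a = s -> pos b = s ->
  1 <= s <= Z.of_nat n /\ Z.of_nat (Lc n pos s) = s + 1 /\ Z.of_nat (Lc n pos (s-1)) = s - 1 /\
  (forall c, is_chip n c -> pos c = s -> c = a \/ c = b).
Proof.
  intros [Hr HL] Ha Hb Hab Pa Pb.
  assert (H2 : (2 <= load n pos s)%nat).
  { rewrite load_cnt. apply (cnt_ge2 _ _ a b (chips_NoDup n) Hab); try apply chips_In; auto;
    apply Z.eqb_eq; auto. }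
  pose proof (Lc_split n pos s) as Hs.
  pose proof (Hr a Ha) as Ra.
  assert (Hlo : 1 <= s).
  { destruct (Z.le_gt_cases 1 s); [auto|]. assert (s = 0) by lia.
    rewrite (Lc_low n pos (s-1)) in Hs by (intros i Hi; specialize (Hr i Hi); lia).
    specialize (HL s ltac:(lia)). lia. }
  assert (Hhi : s <= Z.of_nat n).
  { destruct (Z.le_gt_cases s (Z.of_nat n)); [auto|]. assert (s = Z.of_nat n + 1) by lia.
    rewrite (Lc_high n pos s) in Hs by (intros i Hi; specialize (Hr i Hi); lia).
    specialize (HL (s - 1) ltac:(lia)). lia. }
  pose proof (HL s ltac:(lia)). pose proof (HL (s-1) ltac:(lia)).
  assert (Hl2 : load n pos s = 2%nat) by lia.
  repeat split; try lia.
  intros c Hc Pc. destruct (Nat.eq_dec c a); [auto|]. destruct (Nat.eq_dec c b); [auto|].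
  exfalso.
  assert (H3 : (3 <= load n pos s)%nat).
  { rewrite load_cnt. apply (cnt_ge3 _ _ a b c (chips_NoDup n)); try apply chips_In; auto;
    apply Z.eqb_eq; auto. }
  lia.
Qed.

Lemma Inv_step n pos q : Inv n pos -> topple_step n pos q -> Inv n q.
Proof.
  intros HI Hst. destruct (step_fire _ _ _ Hst) as (a & b & s & Ha & Hb & Hab & Pa & Pb & ->).
  assert (Hab' : a <> b) by lia.
  destruct (Inv_site n pos a b s HI Ha Hb Hab' Pa Pb) as (Hs & HLs & HLs1 & _).
  destruct HI as [Hr HL]. split.
  - intros i Hi. unfold fire. destruct (Nat.eqb_spec i a); [lia|].
    destruct (Nat.eqb_spec i b); [lia|]. auto.
  - intros k Hk. pose proof (Lc_fire n pos a b s k Ha Hb Hab' Pa Pb) as E.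
    specialize (HL k Hk). unfold zb in E.
    destruct (Z.eqb_spec k s), (Z.eqb_spec k (s-1)); subst; lia.
Qed.

Lemma diamond n x y1 y2 : Inv n x -> topple_step n x y1 -> topple_step n x y2 ->
  y1 = y2 \/ exists z, topple_step n y1 z /\ topple_step n y2 z.
Proof.
  intros HI S1 S2.
  destruct (step_fire _ _ _ S1) as (a & b & s & Ha & Hb & Hab & Pa & Pb & ->).
  destruct (step_fire _ _ _ S2) as (a' & b' & t & Ha' & Hb' & Hab' & Pa' & Pb' & ->).
  destruct (Inv_site n x a b s HI Ha Hb ltac:(lia) Pa Pb) as (Hs & L1 & L2 & U).
  destruct (Inv_site n x a' b' t HI Ha' Hb' ltac:(lia) Pa' Pb') as (Ht & L1' & L2' & U').
  destruct (Z.eq_dec s t) as [<-|Hst].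
  - left. destruct (U a' Ha' Pa') as [E1|E1]; destruct (U b' Hb' Pb') as [E2|E2]; subst; try lia.
    reflexivity.
  - right.
    assert (t <> s + 1) by (intro E; rewrite E in L2'; replace (s + 1 - 1) with s in L2' by lia; lia).
    assert (t <> s - 1) by (intro E; rewrite E in L1'; lia).
    assert (a' <> a) by (intro; subst; congruence).
    assert (a' <> b) by (intro; subst; congruence).
    assert (b' <> a) by (intro; subst; congruence).
    assert (b' <> b) by (intro; subst; congruence).
    exists (fire (fire x a b s) a' b' t). split.
    + apply fire_step; auto; rewrite fire_o; auto.
    + replace (fire (fire x a b s) a' b' t) with (fire (fire x a' b' t) a b s).
      * apply fire_step; auto; rewrite fire_o; auto; lia.
      * apply functional_extensionality. intros i. unfold fire.
        destruct (Nat.eqb_spec i a), (Nat.eqb_spec i b), (Nat.eqb_spec i a'), (Nat.eqb_spec i b');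
          subst; try lia; reflexivity.
Qed.

Definition reach n := topple_reach n.

Lemma stable_no_step n x y : stable n x -> ~ topple_step n x y.
Proof.
  intros Hs St. destruct (step_fire _ _ _ St) as (a & b & s & Ha & Hb & Hab & Pa & Pb & _).
  apply (Hs a b Ha Hb ltac:(lia)). congruence.
Qed.

Lemma reach_Inv n x y : Inv n x -> topple_reach n x y -> Inv n y.
Proof.
  intros HI H. apply clos_rt_rt1n_iff in H. induction H; auto.
  apply IHclos_refl_trans_1n. eapply Inv_step; eauto.
Qed.

Lemma conf1 n x f : Inv n x -> topple_reach n x f -> stable n f ->
  forall y, topple_step n x y -> topple_reach n y f.
Proof.
  intros HI H Hf. apply clos_rt_rt1n_iff in H. induction H as [x|x z f Sxz Hzf IH]; intros y Sxy.
  - exfalso. eapply stable_no_step; eauto.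
  - destruct (diamond n x z y HI Sxz Sxy) as [<-|[w [Szw Syw]]].
    + apply clos_rt_rt1n_iff; auto.
    + assert (HIz : Inv n z) by (eapply Inv_step; eauto).
      specialize (IH HIz Hf w Szw).
      eapply rt_trans; [apply rt_step; eauto|]. auto.
Qed.

Lemma conf n x y f : Inv n x -> topple_reach n x y -> topple_reach n x f -> stable n f ->
  topple_reach n y f.
Proof.
  intros HI H. apply clos_rt_rt1n_iff in H. induction H as [x|x z y Sxz Hzy IH]; intros Hf Sf; auto.
  apply IH; [eapply Inv_step; eauto| |auto]. eapply conf1; eauto.
Qed.

Lemma stable_reach n x y : stable n x -> topple_reach n x y -> y = x.
Proof.
  intros Hs H. apply clos_rt_rt1n_iff in H. destruct H; auto.
  exfalso. eapply stable_no_step; eauto.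
Qed.

Lemma toppleable_reach n x y : Inv n x -> topple_reach n x y -> (toppleable n x <-> toppleable n y).
Proof.
  intros HI H. split.
  - intros (f & Hf & Sf & If). exists f. split; auto. eapply conf; eauto.
  - intros (f & Hf & Sf & If). exists f. split; auto. eapply rt_trans; eauto.
Qed.

Lemma stays_top n x y c : Inv n x -> is_chip n c -> x c = Z.of_nat n + 1 -> topple_reach n x y ->
  y c = Z.of_nat n + 1.
Proof.
  intros HI Hc Hx H. apply clos_rt_rt1n_iff in H. induction H as [x|x z y Sxz Hzy IH]; auto.
  apply IH; [eapply Inv_step; eauto|].
  destruct (step_fire _ _ _ Sxz) as (a & b & s & Ha & Hb & Hab & Pa & Pb & ->).
  destruct (Inv_site n x a b s HI Ha Hb ltac:(lia) Pa Pb) as (Hs & _).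
  rewrite fire_o; auto; intro; subst; lia.
Qed.

Ltac zcase := repeat (match goal with
 | |- context [Z.eqb ?a ?b] => destruct (Z.eqb_spec a b)
 | |- context [Z.leb ?a ?b] => destruct (Z.leb_spec a b)
 end; cbn [andb] in * ).

Lemma inS_range n p pos : in_S n p pos -> forall i, is_chip n i -> 1 <= pos i <= Z.of_nat n.
Proof. intros [H _]; auto. Qed.

Lemma inS_load n p pos t : in_S n p pos -> 1 <= t <= Z.of_nat n ->
  load n pos t = (if Z.eqb t (Z.of_nat p) then 2%nat else 1%nat).
Proof.
  intros [_ H] Ht. replace t with (Z.of_nat (Z.to_nat t)) by lia.
  rewrite H by lia. destruct (Nat.eqb_spec (Z.to_nat t) p), (Z.eqb_spec (Z.of_nat (Z.to_nat t)) (Z.of_nat p));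
    auto; lia.
Qed.

Lemma inS_load0 n p pos t : in_S n p pos -> (t < 1 \/ Z.of_nat n < t) -> load n pos t = 0%nat.
Proof.
  intros H Ht. apply load_zero. intros i Hi. pose proof (inS_range n p pos H i Hi). lia.
Qed.

Lemma inS_Inv n p pos : in_S n p pos -> (1 <= p <= n)%nat -> Inv n pos.
Proof.
  intros H Hp. pose proof (inS_range n p pos H) as Hr.
  assert (HL : forall k, (k <= n)%nat ->
    Z.of_nat (Lc n pos (Z.of_nat k)) = Z.of_nat k + (if (p <=? k)%nat then 1 else 0)).
  { induction k as [|k IH]; intros Hk.
    - rewrite Lc_low by (intros i Hi; specialize (Hr i Hi); lia).
      destruct (Nat.leb_spec p 0); lia.
    - rewrite Lc_split. replace (Z.of_nat (S k) - 1) with (Z.of_nat k) by lia.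
      rewrite Nat2Z.inj_add, IH by lia.
      rewrite (inS_load n p pos) by (auto; lia).
      destruct (Nat.leb_spec p k), (Nat.leb_spec p (S k)), (Z.eqb_spec (Z.of_nat (S k)) (Z.of_nat p));
        simpl; lia. }
  split.
  - intros i Hi; specialize (Hr i Hi); lia.
  - intros k Hk. destruct (Z.eq_dec k (Z.of_nat n + 1)).
    + rewrite Lc_high by (intros i Hi; specialize (Hr i Hi); lia). lia.
    + replace k with (Z.of_nat (Z.to_nat k)) by lia. rewrite HL by lia.
      destruct (Nat.leb_spec p (Z.to_nat k)); lia.
Qed.

Definition Ld n p pos (m : Z) (t : Z) : nat :=
  if t =? Z.of_nat p - 1 then S (load n pos t)
  else if (Z.of_nat p <=? t) && (t <=? m - 1) then 1%nat
  else if t =? m then 0%nat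
  else if t =? m + 1 then S (load n pos t)
  else load n pos t.

Definition SW n p pos (m : Z) (q : nat -> Z) (kap : nat) : Prop :=
  is_chip n kap /\ q kap = m + 1 /\ Z.of_nat p <= pos kap <= m /\
  (forall i, is_chip n i -> pos i < Z.of_nat p -> q i = pos i) /\
  (forall i, is_chip n i -> m < pos i -> q i = pos i) /\
  (forall i, is_chip n i -> Z.of_nat p <= pos i <= m -> i <> kap ->
      Z.of_nat p - 1 <= q i <= m - 1 /\ pos i - 1 <= q i /\
      (q i = pos i - 1 \/ q i <= Z.of_nat i + Z.of_nat p - 2)) /\
  (forall i, is_chip n i -> Z.of_nat p <= pos i <= m -> (i <= kap)%nat) /\
  (forall t, load n q t = Ld n p pos m t).

Definition Wc n p pos (m : Z) : nat :=
  cnt (chips n) (fun i => (Z.of_nat p <=? pos i) && (pos i <=? m)).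

Lemma Wc_val n p pos k : in_S n p pos -> (1 <= p)%nat -> (p + k <= n)%nat ->
  Z.of_nat (Wc n p pos (Z.of_nat p + Z.of_nat k)) = Z.of_nat k + 2.
Proof.
  intros H Hp. induction k as [|k IH]; intros Hk.
  - unfold Wc. rewrite (cnt_ext _ _ (fun i => pos i =? Z.of_nat p)).
    + rewrite <- load_cnt, (inS_load n p pos) by (auto; lia). rewrite Z.eqb_refl. lia.
    + intros x _. zcase; lia.
  - unfold Wc. rewrite (cnt_split _ _ (fun i => (Z.of_nat p <=? pos i) && (pos i <=? Z.of_nat p + Z.of_nat k))
                          (fun i => pos i =? Z.of_nat p + Z.of_nat (S k))).
    + rewrite <- load_cnt, Nat2Z.inj_add. fold (Wc n p pos (Z.of_nat p + Z.of_nat k)).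
      rewrite IH by lia. rewrite (inS_load n p pos) by (auto; lia). zcase; lia.
    + intros x _. zcase; simpl; lia.
Qed.

Lemma kap_bound n p pos k kap : in_S n p pos -> (1 <= p)%nat -> (p + k <= n)%nat ->
  (forall i, is_chip n i -> Z.of_nat p <= pos i <= Z.of_nat p + Z.of_nat k -> (i <= kap)%nat) ->
  Z.of_nat k + 2 <= Z.of_nat kap.
Proof.
  intros H Hp Hk Hi. rewrite <- (Wc_val n p pos k) by auto.
  apply inj_le. eapply Nat.le_trans; [|apply (Nat.le_trans _ _ _ (cnt_seq_le 1 (S n) kap)); lia].
  unfold Wc, chips. apply cnt_le. intros x Hx Fx. apply andb_prop in Fx as [F1 F2].
  apply Nat.leb_le. apply Hi; [apply chips_In; auto|]. apply Z.leb_le in F1, F2. lia.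
Qed.

Lemma two_at_p n p pos : in_S n p pos -> (1 <= p <= n)%nat ->
  exists a b, is_chip n a /\ is_chip n b /\ (a < b)%nat /\ pos a = Z.of_nat p /\ pos b = Z.of_nat p /\
    forall c, is_chip n c -> pos c = Z.of_nat p -> c = a \/ c = b.
Proof.
  intros H Hp. pose proof (inS_load n p pos (Z.of_nat p) H ltac:(lia)) as L.
  rewrite Z.eqb_refl in L.
  destruct (cnt_two (chips n) (fun i => pos i =? Z.of_nat p) (chips_NoDup n)) as (x & y & Hxy & Hx & Hy & Fx & Fy).
  { rewrite <- load_cnt; lia. }
  apply Z.eqb_eq in Fx, Fy. apply chips_In in Hx, Hy.
  assert (U : forall c, is_chip n c -> pos c = Z.of_nat p -> c = x \/ c = y).
  { intros c Hc Pc. destruct (Nat.eq_dec c x); auto. destruct (Nat.eq_dec c y); auto.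
    exfalso. assert (3 <= load n pos (Z.of_nat p))%nat; [|lia].
    rewrite load_cnt. apply (cnt_ge3 _ _ x y c (chips_NoDup n)); try apply chips_In; auto;
      apply Z.eqb_eq; auto. }
  destruct (Nat.lt_ge_cases x y).
  - exists x, y. repeat (split; [auto|]). auto.
  - exists y, x. repeat (split; [auto; lia|]). intros c Hc Pc. destruct (U c Hc Pc); auto.
Qed.

Lemma resident n p pos t : in_S n p pos -> 1 <= t <= Z.of_nat n -> t <> Z.of_nat p ->
  exists r, is_chip n r /\ pos r = t /\ forall c, is_chip n c -> pos c = t -> c = r.
Proof.
  intros H Ht Htp. pose proof (inS_load n p pos t H Ht) as L.
  destruct (Z.eqb_spec t (Z.of_nat p)); [contradiction|].
  destruct (cnt_ex (chips n) (fun i => pos i =? t)) as (r & Hr & Fr).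
  { rewrite <- load_cnt; lia. }
  apply Z.eqb_eq in Fr. apply chips_In in Hr. exists r. split; [auto|split; [auto|]].
  intros c Hc Pc. destruct (Nat.eq_dec c r); auto. exfalso.
  assert (2 <= load n pos t)%nat; [|lia].
  rewrite load_cnt. apply (cnt_ge2 _ _ c r (chips_NoDup n)); try apply chips_In; auto;
    apply Z.eqb_eq; auto.
Qed.

Lemma sweep_base n p pos : in_S n p pos -> (1 <= p <= n)%nat ->
  exists q kap, topple_reach n pos q /\ SW n p pos (Z.of_nat p + Z.of_nat 0) q kap.
Proof.
  intros H Hp. destruct (two_at_p n p pos H Hp) as (a & b & Ha & Hb & Hab & Pa & Pb & U).
  pose proof (inS_range n p pos H) as Hr.
  exists (fire pos a b (Z.of_nat p)), b. split; [apply rt_step, fire_step; auto|].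
  replace (Z.of_nat p + Z.of_nat 0) with (Z.of_nat p) by lia.
  assert (Hab' : a <> b) by lia.
  unfold SW. split; [auto|]. split; [apply fire_b; auto|]. split; [lia|].
  split; [intros i Hi Pi; rewrite fire_o; auto; intro; subst; lia|].
  split; [intros i Hi Pi; rewrite fire_o; auto; intro; subst; lia|].
  split.
  { intros i Hi Pi Hib. destruct (U i Hi ltac:(lia)) as [->| ->]; [|contradiction].
    rewrite fire_a. lia. }
  split.
  { intros i Hi Pi. destruct (U i Hi ltac:(lia)) as [->| ->]; lia. }
  intros t. apply Nat2Z.inj.
  pose proof (load_fire n pos a b (Z.of_nat p) t Ha Hb Hab' Pa Pb) as E.
  pose proof (inS_load n p pos (Z.of_nat p) H ltac:(lia)) as Lp. rewrite Z.eqb_refl in Lp.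
  revert E. unfold Ld, zb. zcase; try lia.
  all: match goal with Hq : _ = Z.of_nat _ |- _ => rewrite Hq in *; lia end.
Qed.

Lemma sweep_step n p pos k q kap : in_S n p pos -> (1 <= p <= n)%nat -> (p + S k <= n)%nat ->
  SW n p pos (Z.of_nat p + Z.of_nat k) q kap ->
  exists q' kap', topple_step n q q' /\ SW n p pos (Z.of_nat p + Z.of_nat (S k)) q' kap'.
Proof.
  intros H Hp Hk HS.
  replace (Z.of_nat p + Z.of_nat (S k)) with (Z.of_nat p + Z.of_nat k + 1) by lia.
  set (m := Z.of_nat p + Z.of_nat k) in *.
  destruct HS as (S1 & S2 & S3 & S4 & S5 & S6 & S7 & S8).
  pose proof (inS_range n p pos H) as Hr.
  destruct (resident n p pos (m+1) H ltac:(lia) ltac:(lia)) as (r & Hrc & Pr & Ur).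
  assert (Qr : q r = m + 1) by (rewrite S5; auto; lia).
  assert (Hrk : r <> kap) by (intro E; rewrite E in Pr; lia).
  pose proof (kap_bound n p pos k kap H ltac:(lia) ltac:(lia) S7) as KB.
  assert (Lp : load n pos (m+1) = 1%nat).
  { rewrite (inS_load n p pos) by (auto; lia). destruct (Z.eqb_spec (m+1) (Z.of_nat p)); lia. }
  assert (G : forall lo hi, ((lo = kap /\ hi = r) \/ (lo = r /\ hi = kap)) -> (lo < hi)%nat ->
             SW n p pos (m+1) (fire q lo hi (m+1)) hi).
  { intros lo hi Hlh Hlt.
    assert (F : is_chip n lo /\ is_chip n hi /\ q lo = m + 1 /\ q hi = m + 1 /\
                Z.of_nat p <= pos lo <= m + 1 /\ Z.of_nat p <= pos hi <= m + 1 /\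
                (kap <= hi)%nat /\ (r <= hi)%nat)
      by (destruct Hlh as [[-> ->]|[-> ->]]; unfold is_chip in *; repeat split; lia).
    destruct F as (Clo & Chi & Qlo & Qhi & Plo & Phi & Khi & Rhi).
    assert (Hne : lo <> hi) by lia.
    unfold SW. split; [auto|]. split; [apply fire_b; auto|]. split; [lia|].
    split; [intros i Hi Pi; rewrite fire_o; [auto| |]; intro; subst; lia|].
    split; [intros i Hi Pi; rewrite fire_o; [apply S5; auto; lia| |]; intro; subst; lia|].
    split.
    { intros i Hi Pi Hih. destruct (Nat.eq_dec i lo) as [->|Hil].
      - rewrite fire_a. split; [lia|]. split; [lia|].
        destruct Hlh as [[-> ->]|[-> ->]]; [right; lia|left; lia].
      - assert (i <> kap /\ i <> r) as [Hik Hir] by (destruct Hlh as [[-> ->]|[-> ->]]; auto).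
        assert (pos i <> m + 1) by (intro E; apply Hir; apply Ur; auto).
        rewrite fire_o by auto. destruct (S6 i Hi ltac:(lia) Hik) as (T1 & T2 & T3).
        split; [lia|]. split; auto. }
    split.
    { intros i Hi Pi. destruct (Z.eq_dec (pos i) (m+1)) as [E|E].
      - rewrite (Ur i Hi E). auto.
      - specialize (S7 i Hi ltac:(lia)). lia. }
    intros t. apply Nat2Z.inj.
    pose proof (load_fire n q lo hi (m+1) t Clo Chi Hne Qlo Qhi) as E.
    rewrite S8 in E.
    assert (Lt : load n pos t = 1%nat \/ t <> m + 1) by (destruct (Z.eq_dec t (m+1)); [left; subst; auto|right; auto]).
    revert E. unfold Ld, zb. zcase; lia. }
  destruct (Nat.lt_ge_cases kap r).
  - exists (fire q kap r (m+1)), r. split.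
    + apply fire_step; auto.
    + apply G; auto.
  - exists (fire q r kap (m+1)), kap. split.
    + apply fire_step; auto; lia.
    + apply G; auto; lia.
Qed.

Lemma sweep n p pos : in_S n p pos -> (1 <= p <= n)%nat ->
  forall k, (p + k <= n)%nat ->
  exists q kap, topple_reach n pos q /\ SW n p pos (Z.of_nat p + Z.of_nat k) q kap.
Proof.
  intros H Hp. induction k as [|k IH]; intros Hk.
  - apply sweep_base; auto.
  - destruct (IH ltac:(lia)) as (q & kap & R & HS).
    destruct (sweep_step n p pos k q kap H Hp Hk HS) as (q' & kap' & St & HS').
    exists q', kap'. split; auto. eapply rt_trans; [apply R|]. apply rt_step; auto.
Qed.

Lemma step_down n x y : Inv (S n) x -> x (S (S n)) = Z.of_nat (S n) + 1 ->
  topple_step (S n) x y -> topple_step n x y /\ y (S (S n)) = Z.of_nat (S n) + 1.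
Proof.
  intros HI Hx St. destruct (step_fire _ _ _ St) as (a & b & s & Ha & Hb & Hab & Pa & Pb & ->).
  destruct (Inv_site (S n) x a b s HI Ha Hb ltac:(lia) Pa Pb) as (Hs & _).
  assert (a <> S (S n)) by (intro; subst; lia).
  assert (b <> S (S n)) by (intro; subst; lia).
  split.
  - apply fire_step; auto; unfold is_chip in *; lia.
  - rewrite fire_o; auto.
Qed.

Lemma reach_down n x y : Inv (S n) x -> x (S (S n)) = Z.of_nat (S n) + 1 ->
  topple_reach (S n) x y -> topple_reach n x y.
Proof.
  intros HI Hx H. apply clos_rt_rt1n_iff in H. induction H as [x|x z y Sxz Hzy IH].
  - apply rt_refl.
  - destruct (step_down n x z HI Hx Sxz) as [S' Hz].
    eapply rt_trans; [apply rt_step; eauto|]. apply IH; auto. eapply Inv_step; eauto.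
Qed.

Lemma reach_up n x y : topple_reach n x y -> topple_reach (S n) x y /\ y (S (S n)) = x (S (S n)).
Proof.
  intros H. apply clos_rt_rt1n_iff in H. induction H as [x|x z y Sxz Hzy IH].
  - split; [apply rt_refl|auto].
  - destruct IH as [R E].
    destruct (step_fire _ _ _ Sxz) as (a & b & s & Ha & Hb & Hab & Pa & Pb & Ez).
    split.
    + eapply rt_trans; [apply rt_step|apply R].
      rewrite Ez. apply fire_step; auto; unfold is_chip in *; lia.
    + rewrite E, Ez. rewrite fire_o; auto; unfold is_chip in *; lia.
Qed.

Definition bounds n p (pos : nat -> Z) : Prop := forall i : nat, (1 <= i <= S n)%nat ->
     Z.of_nat p + Z.of_nat i - Z.of_nat n - 1 <= pos i <= Z.of_nat p + Z.of_nat i - 1.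

Lemma load_facts n p pos t : in_S n p pos -> (1 <= p <= n)%nat ->
  (load n pos t = 0%nat /\ (t < 1 \/ Z.of_nat n < t)) \/
  (1 <= t <= Z.of_nat n /\ t <> Z.of_nat p /\ load n pos t = 1%nat) \/
  (t = Z.of_nat p /\ load n pos t = 2%nat).
Proof.
  intros H Hp. destruct (Z.le_gt_cases 1 t); [destruct (Z.le_gt_cases t (Z.of_nat n))|].
  - rewrite (inS_load n p pos t H) by lia. destruct (Z.eqb_spec t (Z.of_nat p)); [right; right|right; left]; auto.
  - left. split; [apply (inS_load0 n p pos); auto|lia].
  - left. split; [apply (inS_load0 n p pos); auto|lia].
Qed.

Lemma p1_case n pos q : (1 <= n)%nat -> in_S n 1 pos -> SW n 1 pos (Z.of_nat n) q (S n) ->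
  stable n q /\ (reads_increasing n q <-> bounds n 1 pos).
Proof.
  intros Hn H HS. destruct HS as (S1 & S2 & S3 & S4 & S5 & S6 & S7 & S8).
  pose proof (inS_range n 1 pos H) as Hr.
  assert (W : forall i, (1 <= i <= n)%nat -> 0 <= q i <= Z.of_nat n - 1 /\ pos i - 1 <= q i /\
                (q i = pos i - 1 \/ q i <= Z.of_nat i - 1)).
  { intros i Hi. assert (Hc : is_chip n i) by (unfold is_chip; lia).
    specialize (Hr i Hc). destruct (S6 i Hc ltac:(lia) ltac:(lia)) as (T1 & T2 & T3). lia. }
  assert (Stab : stable n q).
  { intros i j Hi Hj Hij E.
    assert (L2 : (2 <= load n q (q i))%nat).
    { rewrite load_cnt. apply (cnt_ge2 _ _ i j (chips_NoDup n) Hij); try apply chips_In; auto;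
        apply Z.eqb_eq; auto. }
    rewrite S8 in L2. set (t := q i) in *. clearbody t.
    destruct (load_facts n 1 pos t H ltac:(lia)) as [LF|[LF|LF]];
    revert L2; unfold Ld; zcase; lia. }
  split; [exact Stab|]. split.
  - intros Inc.
    assert (D : forall d, (d < n)%nat -> q (n - d)%nat <= Z.of_nat (n - d) - 1).
    { induction d as [|d IHd]; intros Hd.
      - replace (n - 0)%nat with n by lia. destruct (W n ltac:(lia)); lia.
      - specialize (IHd ltac:(lia)).
        assert (q (n - S d)%nat < q (n - d)%nat) by (apply Inc; unfold is_chip; lia).
        lia. }
    intros i Hi. destruct (Nat.eq_dec i (S n)) as [->|Hin].
    + specialize (Hr (S n) ltac:(unfold is_chip; lia)). lia.
    + specialize (D (n - i)%nat ltac:(lia)). replace (n - (n - i))%nat with i in D by lia.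
      destruct (W i ltac:(lia)). specialize (Hr i ltac:(unfold is_chip; lia)). lia.
  - intros B.
    assert (U : forall i, (1 <= i <= n)%nat -> q i <= Z.of_nat i - 1).
    { intros i Hi. destruct (W i Hi) as (T1 & T2 & [T3|T3]); [|lia].
      specialize (B i ltac:(lia)). lia. }
    assert (X : forall i, (1 <= i <= n)%nat -> forall j, (1 <= j <= i)%nat -> q j = Z.of_nat j - 1).
    { induction i as [|i IHi]; intros Hi j Hj; [lia|].
      destruct (Nat.eq_dec j (S i)) as [->|Hji]; [|apply IHi; lia].
      destruct (W (S i) Hi) as (T1 & _). pose proof (U (S i) Hi).
      destruct (Z.eq_dec (q (S i)) (Z.of_nat (S i) - 1)) as [Eq|Neq]; [exact Eq|]. exfalso.
      set (j0 := S (Z.to_nat (q (S i)))).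
      assert (Hj0 : q j0 = Z.of_nat j0 - 1) by (apply IHi; unfold j0; lia).
      apply (Stab j0 (S i)); unfold is_chip, j0 in *; try lia.
      }
    intros i j Hi Hj Hij. unfold is_chip in *.
    destruct (Nat.eq_dec j (S n)) as [->|Hjn].
    + rewrite S2. rewrite (X n ltac:(lia) i ltac:(lia)). lia.
    + rewrite (X n ltac:(lia) i ltac:(lia)), (X n ltac:(lia) j ltac:(lia)). lia.
Qed.

Lemma chips_S n : chips (S n) = chips n ++ [S (S n)].
Proof. unfold chips. rewrite (seq_S (S n) 1). reflexivity. Qed.

Lemma load_S n q t : q (S (S n)) <> t -> load (S n) q t = load n q t.
Proof.
  intros Hq. rewrite !load_cnt, chips_S, cnt_app. rewrite cnt_cons, cnt_nil.
  destruct (Z.eqb_spec (q (S (S n))) t); [contradiction|]. simpl. lia.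
Qed.

Lemma rec_inS n' p' pos q : in_S (S n') (S p') pos -> (1 <= p' <= n')%nat ->
  SW (S n') (S p') pos (Z.of_nat (S n')) q (S (S n')) -> in_S n' p' q.
Proof.
  intros H Hp HS. destruct HS as (S1 & S2 & S3 & S4 & S5 & S6 & S7 & S8).
  pose proof (inS_range _ _ pos H) as Hr.
  split.
  - intros i Hi. assert (Hc : is_chip (S n') i) by (unfold is_chip in *; lia).
    specialize (Hr i Hc). destruct (Z.lt_ge_cases (pos i) (Z.of_nat (S p'))).
    + rewrite S4 by auto. lia.
    + destruct (S6 i Hc ltac:(lia) ltac:(unfold is_chip in *; lia)) as (T1 & _). lia.
  - intros s Hs. rewrite <- load_S by (rewrite S2; lia). rewrite S8.
    destruct (load_facts (S n') (S p') pos (Z.of_nat s) H ltac:(lia)) as [LF|[LF|LF]];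
    unfold Ld; destruct (Nat.eqb_spec s p'); apply Nat2Z.inj; zcase; lia.
Qed.

Lemma rec_bounds n' p' pos q : in_S (S n') (S p') pos -> (1 <= p' <= n')%nat ->
  SW (S n') (S p') pos (Z.of_nat (S n')) q (S (S n')) ->
  (bounds n' p' q <-> bounds (S n') (S p') pos).
Proof.
  intros H Hp HS. destruct HS as (S1 & S2 & S3 & S4 & S5 & S6 & S7 & S8).
  pose proof (inS_range _ _ pos H) as Hr. split.
  - intros Bq i Hi. assert (Hc : is_chip (S n') i) by (unfold is_chip; lia).
    specialize (Hr i Hc).
    destruct (Nat.eq_dec i (S (S n'))) as [->|Hin]; [lia|].
    destruct (Z.lt_ge_cases (pos i) (Z.of_nat (S p'))).
    + specialize (Bq i ltac:(lia)). rewrite S4 in Bq by auto. lia.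
    + specialize (Bq i ltac:(lia)). destruct (S6 i Hc ltac:(lia) Hin) as (T1 & T2 & T3). lia.
  - intros Bp i Hi. assert (Hc : is_chip (S n') i) by (unfold is_chip; lia).
    specialize (Hr i Hc). specialize (Bp i ltac:(lia)).
    destruct (Z.lt_ge_cases (pos i) (Z.of_nat (S p'))).
    + rewrite S4 by auto. lia.
    + destruct (S6 i Hc ltac:(lia) ltac:(lia)) as (T1 & T2 & T3). lia.
Qed.

Theorem main_ind : forall p n pos, (1 <= p <= n)%nat -> in_S n p pos ->
  (toppleable n pos <-> bounds n p pos).
Proof.
  induction p as [|p' IH]; intros n pos Hp H; [lia|].
  destruct (sweep n (S p') pos H Hp (n - S p') ltac:(lia)) as (q & kap & R & HS).
  replace (Z.of_nat (S p') + Z.of_nat (n - S p')) with (Z.of_nat n) in HS by lia.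
  pose proof (inS_Inv n (S p') pos H Hp) as HI.
  rewrite (toppleable_reach n pos q HI R).
  pose proof (reach_Inv n pos q HI R) as HIq.
  pose proof (inS_range _ _ pos H) as Hr.
  destruct (Nat.eq_dec kap (S n)) as [Ek|Nk].
  2: { destruct HS as (S1 & S2 & S3 & S4 & S5 & S6 & S7 & S8).
       split; intro X; exfalso.
       - destruct X as (f & Rf & Sf & If).
         pose proof (stays_top n q f kap HIq S1 S2 Rf) as Fk.
         destruct (reach_Inv n q f HIq Rf) as [Rg _].
         assert (Hs : is_chip n (S n)) by (unfold is_chip; lia).
         specialize (Rg (S n) Hs).
         assert (f kap < f (S n)) by (apply If; unfold is_chip in *; auto; lia).
         lia.
       - assert (Hs : is_chip n (S n)) by (unfold is_chip; lia).
         specialize (X (S n) ltac:(lia)). specialize (Hr (S n) Hs).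
         specialize (S7 (S n) Hs ltac:(lia)). unfold is_chip in S1. lia. }
  subst kap.
  destruct p' as [|p''].
  - destruct (p1_case n pos q ltac:(lia) H HS) as [Stq Eq].
    rewrite <- Eq. split.
    + intros (f & Rf & Sf & If). rewrite (stable_reach n q f Stq Rf) in If. auto.
    + intros If. exists q. split; [apply rt_refl|auto].
  - destruct n as [|n']; [lia|].
    pose proof (rec_inS n' (S p'') pos q H ltac:(lia) HS) as Hq.
    rewrite <- (rec_bounds n' (S p'') pos q H ltac:(lia) HS).
    rewrite <- (IH n' q ltac:(lia) Hq).
    destruct HS as (S1 & S2 & S3 & S4 & S5 & S6 & S7 & S8).
    split.
    + intros (f & Rf & Sf & If). exists f. split; [|split].
      * apply reach_down; auto.
      * intros i j Hi Hj. apply Sf; unfold is_chip in *; lia.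
      * intros i j Hi Hj. apply If; unfold is_chip in *; lia.
    + intros (f & Rf & Sf & If).
      destruct (reach_up n' q f Rf) as [Rf' Ef].
      pose proof (inS_Inv n' (S p'') q Hq ltac:(lia)) as HIq'.
      destruct (reach_Inv n' q f HIq' Rf) as [Rg _].
      exists f. split; [auto|split].
      * intros i j Hi Hj Hij.
        destruct (Nat.eq_dec i (S (S n'))) as [->|Hi'];
        destruct (Nat.eq_dec j (S (S n'))) as [->|Hj']; try contradiction.
        -- specialize (Rg j ltac:(unfold is_chip in *; lia)). lia.
        -- specialize (Rg i ltac:(unfold is_chip in *; lia)). lia.
        -- apply Sf; unfold is_chip in *; lia.
      * intros i j Hi Hj Hij.
        destruct (Nat.eq_dec j (S (S n'))) as [->|Hj'].
        -- specialize (Rg i ltac:(unfold is_chip in *; lia)). lia.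
        -- apply If; unfold is_chip in *; lia.
Qed.

Theorem theorem4p2 (n p : nat) (pos : nat -> Z) :
  (1 <= n)%nat -> (1 <= p <= n)%nat -> in_S n p pos ->
  (toppleable n pos <->
   forall i : nat, (1 <= i <= S n)%nat ->
     Z.of_nat p + Z.of_nat i - Z.of_nat n - 1 <= pos i <= Z.of_nat p + Z.of_nat i - 1).
Proof.
  intros _ Hp H. exact (main_ind p n pos Hp H).
Qed.
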